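(* Let $d\in\mathbb{N}$, $r\in\mathbb{N}$ with $r\ge2$, set $\delta=r^{-7/2}$, $\sigma=\sqrt{\log(1/\delta)}/r$, $\gamma=\sqrt{\tfrac52\log r}$, $R=1+\gamma(2+\sqrt2)\sqrt d\,\sigma$, $b=(R+1)^2/(4\sigma^2)$, and let $\mathcal K_r$ and $\mathcal K_G^{\sigma,R}$ be as in the context. For any $k\in\mathbb{N}$, \[ \|\mathcal K_rT_k-\mathcal K_G^{\sigma,R}T_k\|_\infty\le 2R\,\frac{3\delta}{\sqrt{2\pi}\sigma}\max_{y\in[-R,R]}|T_k(y)|. \] In particular, if $R\le1+\frac{1}{10k^2}$, then $\|\mathcal K_rT_k-\mathcal K_G^{\sigma,R}T_k\|_\infty\le\frac{24\delta}{\sqrt{2\pi}\sigma}$.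
   Context: $T_k(x)=\cos(k\arccos x)$ (extended as a polynomial to $\mathbb{R}$). $\|g\|_\infty=\sup_{x\in[-1,1]}|g(x)|$. $s_{b,\delta}$ is a univariate polynomial of degree $\lceil\sqrt{2\theta\log(4/\delta)}\rceil$, $\theta=\lceil\max\{\tfrac12be^2,\log(2/\delta)\}\rceil$, with $|e^{-t}-s_{b,\delta}(t)|\le\delta$ for all $t\in[0,b]$. $K_r(x,y)=\frac1{\sqrt{2\pi}\sigma}s_{b,\delta}^2\!\left(\frac{(x-y)^2}{4\sigma^2}\right)$, $\mathcal K_r(f)(x)=\int_{-R}^RK_r(x,y)f(y)\,dy$. The Gaussian kernel is $K_G^\sigma(x,y)=\frac1{\sqrt{2\pi}\sigma}\exp\!\left(-\frac{(x-y)^2}{2\sigma^2}\right)$ and the truncated Gauss–Weierstrass operator is $\mathcal K_G^{\sigma,R}(f)(x)=\int_{-R}^RK_G^\sigma(x,y)f(y)\,dy$. $\log$ is the natural logarithm. *)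

(* Defs.v *)
From Stdlib Require Import Reals Lra ZArith.
From Coquelicot Require Import Coquelicot.
Open Scope R_scope.

(* Chebyshev polynomials of the first kind, as polynomial functions on R:
   T_0 = 1, T_1 = x, T_{k+2} = 2 x T_{k+1} - T_k.  This is the polynomial
   extension of cos(k arccos x). *)
Fixpoint cheb_pair (k : nat) (x : R) : R * R :=
  match k with
  | O => (1, x)
  | S k' => let (a, b) := cheb_pair k' x in (b, 2 * x * b - a)
  end.
Definition cheb (k : nat) (x : R) : R := fst (cheb_pair k x).

(* ceiling, via Stdlib's up: up y is the integer with y < up y <= y + 1 *)
Definition ceilZ (x : R) : Z := (- (up (- x) - 1))%Z.

(* supremum of |f| over [a, b] (for continuous f on a compact interval this is the max) *)
Definition sup_abs_on (f : R -> R) (a b : R) : R :=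
  real (Lub_Rbar (fun z => exists y, a <= y <= b /\ z = Rabs (f y))).

Definition supnorm (g : R -> R) : R := sup_abs_on g (-1) 1.

Definition is_poly_of_degree (s : R -> R) (n : nat) : Prop :=
  exists a : nat -> R, a n <> 0 /\ forall t, s t = sum_f_R0 (fun i => a i * t ^ i) n.

Definition theta (b δ : R) : R := IZR (ceilZ (Rmax (b * exp 2 / 2) (ln (2 / δ)))).
Definition sdeg (b δ : R) : nat := Z.to_nat (ceilZ (sqrt (2 * theta b δ * ln (4 / δ)))).

Definition is_s (b δ : R) (s : R -> R) : Prop :=
  is_poly_of_degree s (sdeg b δ) /\
  forall t, 0 <= t <= b -> Rabs (exp (- t) - s t) <= δ.

Definition delt (r : nat) : R := Rpower (INR r) (- (7 / 2)).
Definition sigm (r : nat) : R := sqrt (ln (1 / delt r)) / INR r.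
Definition gam (r : nat) : R := sqrt (5 / 2 * ln (INR r)).
Definition Rbd (d r : nat) : R := 1 + gam r * (2 + sqrt 2) * sqrt (INR d) * sigm r.
Definition bpar (d r : nat) : R := (Rbd d r + 1) ^ 2 / (4 * sigm r ^ 2).

Definition Kr (σ : R) (s : R -> R) (x y : R) : R :=
  1 / (sqrt (2 * PI) * σ) * (s ((x - y) ^ 2 / (4 * σ ^ 2))) ^ 2.
Definition KG (σ : R) (x y : R) : R :=
  1 / (sqrt (2 * PI) * σ) * exp (- ((x - y) ^ 2 / (2 * σ ^ 2))).
Definition opKr (σ : R) (s : R -> R) (Rb : R) (f : R -> R) (x : R) : R :=
  RInt (fun y => Kr σ s x y * f y) (- Rb) Rb.
Definition opKG (σ Rb : R) (f : R -> R) (x : R) : R :=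
  RInt (fun y => KG σ x y * f y) (- Rb) Rb.

(* Main.v *)
Require Import Defs.
From Stdlib Require Import Reals Lra Lia.
From Coquelicot Require Import Coquelicot.
Open Scope R_scope.
From Stdlib Require Import Lia.

Lemma cheb_S1 k x : fst (cheb_pair (S k) x) = snd (cheb_pair k x).
Proof. simpl. destruct (cheb_pair k x); reflexivity. Qed.
Lemma cheb_S2 k x : snd (cheb_pair (S k) x) = 2 * x * snd (cheb_pair k x) - fst (cheb_pair k x).
Proof. simpl. destruct (cheb_pair k x); reflexivity. Qed.

Lemma cheb_cont k x0 : continuous (fun x => fst (cheb_pair k x)) x0 /\
                       continuous (fun x => snd (cheb_pair k x)) x0.
Proof.
  induction k as [|k [H1 H2]].
  - split; simpl. apply continuous_const. apply continuous_id.
  - split.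
    + eapply continuous_ext. intros; symmetry; apply cheb_S1. exact H2.
    + eapply continuous_ext. intros; symmetry; apply cheb_S2.
      apply (continuous_minus (fun x => 2 * x * snd (cheb_pair k x))); [|exact H1].
      apply (continuous_mult (fun x => 2 * x)); [|exact H2].
      apply (continuous_mult (fun _ => 2)). apply continuous_const. apply continuous_id.
Qed.

Lemma poly_cont (a : nat -> R) n x0 : continuous (fun t => sum_f_R0 (fun i => a i * t ^ i) n) x0.
Proof.
  induction n as [|n IH].
  - simpl. apply (ex_derive_continuous (K:=R_AbsRing) (V:=R_NormedModule)). auto_derive. easy.
  - simpl. apply (continuous_plus (fun t => sum_f_R0 (fun i => a i * t ^ i) n)); [exact IH|].
    apply (ex_derive_continuous (K:=R_AbsRing) (V:=R_NormedModule)). auto_derive. easy.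
Qed.

Lemma sup_le (E : R -> Prop) M : (forall z, E z -> z <= M) -> 0 <= M -> real (Lub_Rbar E) <= M.
Proof.
  intros HE HM. destruct (Lub_Rbar_correct E) as [Hub Hlub].
  destruct (Lub_Rbar E) as [l| |] eqn:Hl; simpl; try lra.
  specialize (Hlub (Finite M)). simpl in Hlub. apply Hlub. intros z Hz. simpl. now apply HE.
Qed.

Lemma sup_ge (E : R -> Prop) M z : (forall z, E z -> z <= M) -> E z -> z <= real (Lub_Rbar E).
Proof.
  intros HE Hz. destruct (Lub_Rbar_correct E) as [Hub Hlub].
  assert (Rbar_le (Lub_Rbar E) (Finite M)) by (apply Hlub; intros w Hw; simpl; now apply HE).
  specialize (Hub z Hz).
  destruct (Lub_Rbar E) as [l| |]; simpl in *; try easy.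
Qed.


Lemma cheb_Q k y : let a := fst (cheb_pair k y) in let b := snd (cheb_pair k y) in
  a * a - 2 * y * a * b + b * b = 1 - y * y.
Proof.
  induction k as [|k IH]; cbv zeta in *. simpl. ring.
  rewrite cheb_S1, cheb_S2. rewrite <- IH. ring.
Qed.

Lemma cheb_in k y : -1 < y < 1 -> Rabs (cheb k y) <= 1.
Proof.
  intros Hy. unfold cheb. pose proof (cheb_Q k y) as Q. simpl in Q.
  set (a := fst (cheb_pair k y)) in *. set (b := snd (cheb_pair k y)) in *.
  assert (Ha : (1 - y*y) * (a*a) <= (1 - y*y)).
  { assert (0 <= (b - y*a)*(b-y*a)) by (pose proof (Rle_0_sqr (b - y*a)); unfold Rsqr in *; lra).
    assert (E: (1 - y*y) * (a*a) = (a * a - 2 * y * a * b + b * b) - (b - y*a)*(b-y*a)) by ring.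
    rewrite E, Q. lra. }
  assert (a * a <= 1).
  { apply (Rmult_le_reg_l (1 - y*y)). nra. lra. }
  apply Rabs_le. nra.
Qed.

Lemma cheb_par k y : fst (cheb_pair k (-y)) = (-1)^k * fst (cheb_pair k y) /\
                     snd (cheb_pair k (-y)) = (-1)^(S k) * snd (cheb_pair k y).
Proof.
  induction k as [|k [H1 H2]]. simpl; split; ring.
  rewrite !cheb_S1, !cheb_S2, H1, H2. simpl. split; ring.
Qed.

Lemma cheb_grow e K : 0 <= e -> INR K * INR K * e <= 1/10 -> forall j, (j + 1 <= K)%nat ->
  1 <= fst (cheb_pair j (1+e)) <= 1 + 2 * INR j * (INR j + 1) * e /\
  0 <= snd (cheb_pair j (1+e)) - fst (cheb_pair j (1+e)) <= 4 * (INR j + 1) * e.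
Proof.
  intros He HK. induction j as [|j IH]; intros Hj.
  - simpl. lra.
  - assert (Hj' : (j + 1 <= K)%nat) by lia. specialize (IH Hj').
    rewrite cheb_S1, cheb_S2, S_INR.
    set (a := fst (cheb_pair j (1+e))) in *. set (b := snd (cheb_pair j (1+e))) in *.
    assert (HK2 : INR j + 2 <= INR K).
    { replace (INR j + 2) with (INR (j+2)) by (rewrite plus_INR; simpl; ring). apply le_INR. lia. }
    assert (0 <= INR j) by apply pos_INR.
    assert (Hb : b <= 1 + 2 * (INR j + 1) * (INR j + 2) * e) by nra.
    assert (Hp : (INR j + 1) * (INR j + 2) * e <= INR K * INR K * e).
    { apply Rmult_le_compat_r; auto. nra. }
    split; [split|split]; nra.
Qed.

Lemma cheb_ge1 K e : (1 <= K)%nat -> 0 <= e -> INR K * INR K * e <= 1/10 ->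
  1 <= cheb K (1+e) <= 2.
Proof.
  intros HK1 He HK. destruct K as [|j]; [lia|].
  pose proof (cheb_grow e (S j) He HK j ltac:(lia)) as [H1 H2].
  unfold cheb. rewrite cheb_S1. rewrite S_INR in HK.
  assert (0 <= INR j) by apply pos_INR.
  assert ((INR j + 1) * e <= (INR j + 1) * (INR j + 1) * e) by (apply Rmult_le_compat_r; nra).
  nra.
Qed.

Lemma cheb_bound K y : (1 <= K)%nat -> Rabs y <= 1 + 1 / (10 * INR K ^ 2) -> Rabs (cheb K y) <= 2.
Proof.
  intros HK Hy.
  assert (HKp : 1 <= INR K) by (replace 1 with (INR 1) by reflexivity; apply le_INR; lia).
  assert (Hinv : INR K * INR K * (1 / (10 * INR K ^ 2)) = 1/10) by (field; lra).
  destruct (Rlt_or_le (Rabs y) 1) as [Hl|Hl].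
  - pose proof (cheb_in K y). apply Rabs_def2 in Hl. specialize (H ltac:(lra)). lra.
  - assert (Hc : forall z, 1 <= z -> z <= 1 + 1 / (10 * INR K ^ 2) -> Rabs (cheb K z) <= 2).
    { intros z Hz1 Hz2. replace z with (1 + (z - 1)) by ring.
      assert (INR K * INR K * (z - 1) <= 1/10).
      { rewrite <- Hinv. apply Rmult_le_compat_l; nra. }
      pose proof (cheb_ge1 K (z-1) HK ltac:(lra) H). rewrite Rabs_right; lra. }
    destruct (Rle_or_lt 0 y).
    + rewrite Rabs_right in Hl, Hy by lra. apply Hc; lra.
    + rewrite Rabs_left in Hl, Hy by lra.
      replace y with (- (-y)) by ring. unfold cheb.
      rewrite (proj1 (cheb_par K (-y))). rewrite Rabs_mult, pow_1_abs, Rmult_1_l.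
      apply Hc; lra.
Qed.

Lemma params r : (2 <= r)%nat -> 0 < delt r <= 1 /\ 0 < sigm r.
Proof.
  intros Hr.
  assert (Hr2 : 2 <= INR r) by (replace 2 with (INR 2) by (simpl; ring); apply le_INR; lia).
  assert (Hln : 0 < ln (INR r)) by (rewrite <- ln_1; apply ln_increasing; lra).
  unfold sigm, delt, Rpower. split.
  - split. apply exp_pos. rewrite <- exp_0. left. apply exp_increasing.
    nra.
  - apply Rdiv_lt_0_compat; [|lra]. apply sqrt_lt_R0.
    replace (1 / exp (- (7/2) * ln (INR r))) with (exp ((7/2) * ln (INR r))).
    rewrite ln_exp. nra.
    replace (- (7/2) * ln (INR r)) with (- ((7/2) * ln (INR r))) by ring.
    rewrite exp_Ropp. field. apply Rgt_not_eq, exp_pos.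
Qed.

Lemma Rbd_ge1 d r : (2 <= r)%nat -> 1 <= Rbd d r.
Proof.
  intros Hr. destruct (params r Hr) as [_ Hs]. unfold Rbd.
  assert (0 <= gam r) by apply sqrt_pos.
  assert (0 <= sqrt 2) by apply sqrt_pos.
  assert (0 <= sqrt (INR d)) by apply sqrt_pos.
  assert (0 <= gam r * (2 + sqrt 2) * sqrt (INR d)) by (apply Rmult_le_pos; [apply Rmult_le_pos|]; lra).
  nra.
Qed.

Lemma cheb_cont' k x : continuous (cheb k) x.
Proof. exact (proj1 (cheb_cont k x)). Qed.

Lemma cheb_sup_bdd k a b : a <= b -> exists M, forall z,
  (exists y, a <= y <= b /\ z = Rabs (cheb k y)) -> z <= M.
Proof.
  intros Hab.
  destruct (continuity_ab_maj (fun c => Rabs (cheb k c)) a b Hab) as [Mx [HM _]].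
  { intros c _. apply (continuity_pt_comp (cheb k) Rabs).
    apply continuity_pt_filterlim. apply cheb_cont'. apply Rcontinuity_abs. }
  exists (Rabs (cheb k Mx)). intros z [y [Hy ->]]. now apply HM.
Qed.

Lemma ker_bound σ δ R b s x y : 0 < σ -> 0 < δ <= 1 -> 0 <= R -> b = (R+1)^2/(4*σ^2) ->
  (forall t, 0 <= t <= b -> Rabs (exp (-t) - s t) <= δ) -> -1 <= x <= 1 -> -R <= y <= R ->
  Rabs (Kr σ s x y - KG σ x y) <= 3 * δ / (sqrt (2 * PI) * σ).
Proof.
  intros Hs Hd HR Hb Happ Hx Hy.
  set (t := (x - y)^2 / (4 * σ^2)).
  assert (Ht0 : 0 <= t).
  { unfold t. apply Rmult_le_pos. apply pow2_ge_0. left. apply Rinv_0_lt_compat. nra. }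
  assert (Htb : t <= b).
  { rewrite Hb. unfold t. unfold Rdiv. apply Rmult_le_compat_r.
    left. apply Rinv_0_lt_compat. nra. nra. }
  specialize (Happ t (conj Ht0 Htb)).
  assert (HE : exp (- ((x - y) ^ 2 / (2 * σ ^ 2))) = exp (-t) * exp (-t)).
  { rewrite <- exp_plus. f_equal. unfold t. field. lra. }
  assert (Hpi : 0 < sqrt (2 * PI)) by (apply sqrt_lt_R0; pose proof PI_RGT_0; lra).
  assert (HC : 0 < 1 / (sqrt (2 * PI) * σ)) by (apply Rdiv_lt_0_compat; nra).
  unfold Kr, KG. fold t. rewrite HE.
  set (C := 1 / (sqrt (2 * PI) * σ)) in *.
  replace (3 * δ / (sqrt (2 * PI) * σ)) with (C * (3 * δ)) by (unfold C; field; lra).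
  replace (C * s t ^ 2 - C * (exp (- t) * exp (- t))) with (C * (s t ^ 2 - exp (-t) * exp (-t))) by ring.
  rewrite Rabs_mult, (Rabs_right C) by lra.
  apply Rmult_le_compat_l; [lra|].
  assert (He1 : 0 < exp (-t) <= 1).
  { split. apply exp_pos. rewrite <- exp_0. destruct Ht0 as [Ht0|Ht0].
    left; apply exp_increasing; lra. rewrite <- Ht0. replace (-0) with 0 by ring. lra. }
  set (E := exp (-t)) in *. set (u := s t - E).
  replace (s t) with (E + u) by (unfold u; ring).
  assert (Hu : Rabs u <= δ) by (unfold u; rewrite Rabs_minus_sym; exact Happ).
  destruct (Rabs_le_between u δ) as [Hu1 _]; specialize (Hu1 Hu). apply Rabs_le. nra.
Qed.

Lemma s_cont b δ s x0 : is_s b δ s -> continuous s x0.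
Proof.
  intros [[a [_ Ha]] _]. eapply continuous_ext. intros t; symmetry; apply Ha. apply poly_cont.
Qed.



Lemma integrand_cont σ s x k y0 : σ <> 0 -> (forall z, continuous s z) ->
  continuous (fun y => Kr σ s x y * cheb k y) y0 /\ continuous (fun y => KG σ x y * cheb k y) y0.
Proof.
  intros Hs Hc. split.
  - apply (continuous_mult (fun y => Kr σ s x y) (cheb k)); [|apply cheb_cont'].
    unfold Kr.
    apply (continuous_mult (fun _ => 1 / (sqrt (2 * PI) * σ)) (fun y => s ((x - y) ^ 2 / (4 * σ ^ 2)) ^ 2)).
    apply continuous_const.
    apply (continuous_ext (fun y => s ((x - y) ^ 2 / (4 * σ ^ 2)) * s ((x - y) ^ 2 / (4 * σ ^ 2)))).
    { intros; simpl; ring. }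
    assert (H : continuous (fun y => s ((x - y) ^ 2 / (4 * σ ^ 2))) y0).
    { apply (continuous_comp (fun y => (x - y) ^ 2 / (4 * σ ^ 2)) s).
      + apply (ex_derive_continuous (K:=R_AbsRing) (V:=R_NormedModule)). auto_derive.
        repeat split; auto.
      + apply Hc. }
    exact (continuous_mult _ _ _ H H).
  - apply (continuous_mult (fun y => KG σ x y) (cheb k)); [|apply cheb_cont'].
    apply (ex_derive_continuous (K:=R_AbsRing) (V:=R_NormedModule)). unfold KG. auto_derive.
    all: try (split; auto; intros; auto); try lra.
Qed.

Lemma part1 σ δ Rb b s k : 0 < σ -> 0 < δ <= 1 -> 0 <= Rb -> b = (Rb+1)^2/(4*σ^2) -> is_s b δ s ->
  supnorm (fun x => opKr σ s Rb (cheb k) x - opKG σ Rb (cheb k) x)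
    <= 2 * Rb * (3 * δ / (sqrt (2 * PI) * σ)) * sup_abs_on (cheb k) (- Rb) Rb.
Proof.
  intros Hs Hd HR Hb His.
  set (S := sup_abs_on (cheb k) (- Rb) Rb).
  set (C := 3 * δ / (sqrt (2 * PI) * σ)).
  assert (Hpi : 0 < sqrt (2 * PI)) by (apply sqrt_lt_R0; pose proof PI_RGT_0; lra).
  assert (HC : 0 <= C) by (unfold C; apply Rlt_le, Rdiv_lt_0_compat; nra).
  destruct (cheb_sup_bdd k (-Rb) Rb ltac:(lra)) as [M0 HM0].
  assert (HTS : forall y, -Rb <= y <= Rb -> Rabs (cheb k y) <= S).
  { intros y Hy. unfold S, sup_abs_on. eapply sup_ge. exact HM0. exists y; split; auto. }
  assert (HS0 : 0 <= S) by (eapply Rle_trans; [apply Rabs_pos|apply (HTS Rb); lra]).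
  unfold supnorm, sup_abs_on. apply sup_le; [|apply Rmult_le_pos; [|exact HS0]; nra].
  intros z [x [Hx ->]].
  assert (Hsc : forall z, continuous s z) by (intros; eapply s_cont; eauto).
  assert (Hex1 : ex_RInt (fun y => Kr σ s x y * cheb k y) (-Rb) Rb).
  { apply (ex_RInt_continuous (V:=R_CompleteNormedModule)). intros z _; exact (proj1 (integrand_cont σ s x k z ltac:(lra) Hsc)). }
  assert (Hex2 : ex_RInt (fun y => KG σ x y * cheb k y) (-Rb) Rb).
  { apply (ex_RInt_continuous (V:=R_CompleteNormedModule)). intros z _; exact (proj2 (integrand_cont σ s x k z ltac:(lra) Hsc)). }
  unfold opKr, opKG.
  pose proof (RInt_minus _ _ _ _ Hex1 Hex2) as Hm.
  change (RInt (fun y : R => Kr σ s x y * cheb k y) (- Rb) Rb -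
          RInt (fun y : R => KG σ x y * cheb k y) (- Rb) Rb) with
   (minus (RInt (fun y : R => Kr σ s x y * cheb k y) (- Rb) Rb)
          (RInt (fun y : R => KG σ x y * cheb k y) (- Rb) Rb)).
  rewrite <- Hm.
  replace (2 * Rb * C * S) with ((Rb - - Rb) * (C * S)) by ring.
  apply abs_RInt_le_const. lra.
  { apply ex_RInt_minus; auto. }
  intros y Hy. change (minus ?a ?b) with (a - b).
  replace (Kr σ s x y * cheb k y - KG σ x y * cheb k y) with ((Kr σ s x y - KG σ x y) * cheb k y) by ring.
  rewrite Rabs_mult. apply Rmult_le_compat; try apply Rabs_pos.
  - apply (ker_bound σ δ Rb b s x y Hs Hd HR Hb (proj2 His) Hx); lra.
  - apply HTS; lra.
Qed.

Theorem lemma13 (d r k : nat) (s : R -> R) :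
  (2 <= r)%nat ->
  is_s (bpar d r) (delt r) s ->
  supnorm (fun x => opKr (sigm r) s (Rbd d r) (cheb k) x
                    - opKG (sigm r) (Rbd d r) (cheb k) x)
    <= 2 * Rbd d r * (3 * delt r / (sqrt (2 * PI) * sigm r))
       * sup_abs_on (cheb k) (- Rbd d r) (Rbd d r)
  /\
  ((1 <= k)%nat -> Rbd d r <= 1 + 1 / (10 * INR k ^ 2) ->
   supnorm (fun x => opKr (sigm r) s (Rbd d r) (cheb k) x
                     - opKG (sigm r) (Rbd d r) (cheb k) x)
     <= 24 * delt r / (sqrt (2 * PI) * sigm r)).
Proof.
  intros Hr His.
  destruct (params r Hr) as [Hd Hs].
  pose proof (Rbd_ge1 d r Hr) as HR.
  assert (H1 : supnorm (fun x => opKr (sigm r) s (Rbd d r) (cheb k) x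
                    - opKG (sigm r) (Rbd d r) (cheb k) x)
    <= 2 * Rbd d r * (3 * delt r / (sqrt (2 * PI) * sigm r))
       * sup_abs_on (cheb k) (- Rbd d r) (Rbd d r)).
  { eapply part1; eauto. lra. }
  split; [exact H1|].
  intros Hk HRk.
  assert (Hpi : 0 < sqrt (2 * PI)) by (apply sqrt_lt_R0; pose proof PI_RGT_0; lra).
  set (C := 3 * delt r / (sqrt (2 * PI) * sigm r)) in *.
  assert (HC : 0 <= C) by (unfold C; apply Rlt_le, Rdiv_lt_0_compat; nra).
  assert (HS : sup_abs_on (cheb k) (- Rbd d r) (Rbd d r) <= 2).
  { unfold sup_abs_on. apply sup_le; [|lra]. intros z [y [Hy ->]].
    apply cheb_bound; auto. apply Rabs_le in Hy. lra. }
  assert (HKp : 1 <= INR k) by (replace 1 with (INR 1) by reflexivity; apply le_INR; lia).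
  assert (Hk10 : 1 / (10 * INR k ^ 2) <= 1/10).
  { unfold Rdiv. rewrite !Rmult_1_l. apply Rinv_le_contravar. lra. simpl. nra. }
  replace (24 * delt r / (sqrt (2 * PI) * sigm r)) with (8 * C) by (unfold C; field; nra).
  eapply Rle_trans; [exact H1|].
  apply Rle_trans with (2 * Rbd d r * C * 2). apply Rmult_le_compat_l; nra.
  nra.
Qed.
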